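(* Let $G$ be a finitely generated group which fits in an exact sequence $1\to L\to G\to\mathbb{Z}\to1$ with $L$ locally finite, and let $\mathcal{S}$ be a Schreier graph of $G$ (i.e. $G$ acts on the vertex set $\mathcal{S}$). Let $\pi:G\to\mathcal{U}(\ell^2(\mathcal{S}))$ be a unitary representation with no nonzero fixed vector. If there exists a nonzero harmonic $1$-cocycle $b:G\to\ell^2(\mathcal{S})$ for $\pi$ (harmonic with respect to some symmetric probability measure $\mu$ on $G$ with finite generating support), then $G$ does not have Shalom's property $H_{\mathrm{FD}}$.
   Context: A group is locally finite if every finite subset lies in a finite subgroup. A $1$-cocycle for $\pi$ satisfies $b(gh)=b(g)+\pi_g b(h)$; it is $\mu$-harmonic if $\sum_g b(g)\mu(g)=0$. A finitely generated group $G$ has property $H_{\mathrm{FD}}$ if every unitary representation with nonzero first reduced cohomology (1-cocycles modulo the closure, for pointwise convergence, of 1-coboundaries) admits a nonzero finite-dimensional subrepresentation. *)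

(* Defs.v *)
From HB Require Import structures.
From mathcomp Require Import all_boot all_order all_algebra.
From mathcomp Require Import monoid.
From mathcomp Require Import complex.
From mathcomp Require Import reals.
Set Implicit Arguments. Unset Strict Implicit. Unset Printing Implicit Defensive.
Import Order.TTheory GRing.Theory Num.Theory.
Local Open Scope ring_scope.

Section GroupNotions.
Variable G : groupType.

Definition is_subgroup (H : G -> Prop) : Prop :=
  [/\ H 1%g, (forall x y, H x -> H y -> H (x * y)%g) & (forall x, H x -> H (x^-1)%g)].

Definition in_generated (A : G -> Prop) (g : G) : Prop :=
  forall H, is_subgroup H -> (forall a, A a -> H a) -> H g.

Definition finitely_generated : Prop :=
  exists s : seq G, forall g, in_generated (fun a => a \in s) g.

Definition finite_pred (H : G -> Prop) : Prop :=
  exists s : seq G, forall x, H x -> x \in s.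

Definition locally_finite_subgroup (L : G -> Prop) : Prop :=
  forall s : seq G, (forall x, x \in s -> L x) ->
  exists H : G -> Prop, [/\ is_subgroup H, finite_pred H,
                            (forall x, H x -> L x) & (forall x, x \in s -> H x)].

(* G fits in an exact sequence 1 -> L -> G -> Z -> 1 with L locally finite:
   there is a surjective homomorphism G -> Z whose kernel is locally finite. *)
Definition locally_finite_by_Z : Prop :=
  exists phi : G -> int,
    [/\ (forall g h, phi (g * h)%g = phi g + phi h),
        (forall n : int, exists g, phi g = n)
      & locally_finite_subgroup (fun g => phi g = 0)].

Variable R : realType.

Definition supp_list (mu : G -> R) (s : seq G) : Prop :=
  uniq s /\ (forall g, mu g != 0 -> g \in s).

Definition sym_fin_gen_prob (mu : G -> R) : Prop :=
  [/\ (forall g, 0 <= mu g),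
      (exists s, supp_list mu s /\ \sum_(g <- s) mu g = 1),
      (forall g, mu (g^-1)%g = mu g)
    & (forall g, in_generated (fun a => mu a != 0) g)].

End GroupNotions.

Section Hilbert.
Variable R : realType.
Local Notation C := R[i].

Definition is_inner_product (V : lmodType C) (dot : V -> V -> C) : Prop :=
  [/\ (forall (a : C) u v w, dot (a *: u + v) w = a * dot u w + dot v w),
      (forall u v, dot v u = conjc (dot u v)),
      (forall u, 0 <= dot u u)
    & (forall u, dot u u = 0 -> u = 0)].

Definition hnorm2 (V : lmodType C) (dot : V -> V -> C) (u : V) : R :=
  complex.Re (dot u u).

Definition is_complete (V : lmodType C) (dot : V -> V -> C) : Prop :=
  forall u : nat -> V,
    (forall e : R, 0 < e -> exists N, forall m n, (N <= m)%N -> (N <= n)%N ->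
        hnorm2 dot (u m - u n) < e) ->
    exists v : V, forall e : R, 0 < e -> exists N, forall n, (N <= n)%N ->
        hnorm2 dot (u n - v) < e.

Definition is_hilbert (V : lmodType C) (dot : V -> V -> C) : Prop :=
  is_inner_product dot /\ is_complete dot.

Variable G : groupType.

Definition unitary_rep (V : lmodType C) (dot : V -> V -> C) (pi : G -> V -> V)
  : Prop :=
  [/\ (forall g (a : C) u v, pi g (a *: u + v) = a *: pi g u + pi g v),
      (forall g u v, dot (pi g u) (pi g v) = dot u v),
      (forall u, pi 1%g u = u)
    & (forall g h u, pi (g * h)%g u = pi g (pi h u))].

Definition cocycle (V : lmodType C) (pi : G -> V -> V) (b : G -> V) : Prop :=
  forall g h, b (g * h)%g = b g + pi g (b h).

(* b is in the closure, for the topology of pointwise convergence, of the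
   space of 1-coboundaries g |-> pi g v - v. *)
Definition in_closure_coboundaries (V : lmodType C) (dot : V -> V -> C)
  (pi : G -> V -> V) (b : G -> V) : Prop :=
  forall (F : seq G) (e : R), 0 < e ->
    exists v : V, forall g, g \in F -> hnorm2 dot (b g - (pi g v - v)) < e.

Definition reduced_H1_nonzero (V : lmodType C) (dot : V -> V -> C)
  (pi : G -> V -> V) : Prop :=
  exists b : G -> V, cocycle pi b /\ ~ in_closure_coboundaries dot pi b.

Definition in_span (V : lmodType C) (s : seq V) (w : V) : Prop :=
  exists c : 'I_(size s) -> C, w = \sum_(i < size s) c i *: nth 0 s i.

Definition has_nonzero_fd_subrep (V : lmodType C) (pi : G -> V -> V) : Prop :=
  exists s : seq V,
    (exists w, in_span s w /\ w != 0) /\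
    (forall g w, in_span s w -> in_span s (pi g w)).

Definition property_HFD : Prop :=
  forall (V : lmodType C) (dot : V -> V -> C), is_hilbert dot ->
  forall pi : G -> V -> V, unitary_rep dot pi ->
    reduced_H1_nonzero dot pi -> has_nonzero_fd_subrep pi.

Variable S : eqType.

Definition is_action (act : G -> S -> S) : Prop :=
  (forall x, act 1%g x = x) /\ (forall g h x, act (g * h)%g x = act g (act h x)).

Definition cabs2 (z : C) : R := complex.Re z ^+ 2 + complex.Im z ^+ 2.

Definition in_l2 (f : S -> C) : Prop :=
  exists M : R, forall s : seq S, uniq s -> \sum_(x <- s) cabs2 (f x) <= M.

Definition quasi_regular (act : G -> S -> S) (g : G) (f : S -> C) : S -> C :=
  fun x => f (act (g^-1)%g x).

End Hilbert.

(* Main.v *)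
Require Import Defs.
From HB Require Import structures.
From mathcomp Require Import all_boot all_order all_algebra.
From mathcomp Require Import monoid complex reals.
From mathcomp Require Import boolp classical_sets.
From mathcomp Require Import lra ring.
Import Order.TTheory GRing.Theory Num.Theory.
Set Implicit Arguments. Unset Strict Implicit. Unset Printing Implicit Defensive.
Local Open Scope ring_scope.

Local Open Scope complex_scope.
Ltac simpc := do ?
  [ rewrite -[- (_ +i* _)%C]/(_ +i* _)%C
  | rewrite -[(_ +i* _)%C - (_ +i* _)%C]/(_ +i* _)%C
  | rewrite -[(_ +i* _)%C + (_ +i* _)%C]/(_ +i* _)%C
  | rewrite -[(_ +i* _)%C * (_ +i* _)%C]/(_ +i* _)%C
  | rewrite -[(_ +i* _)%C ^*]/(_ +i* _)%C
  | rewrite -[_ *: (_ +i* _)%C]/(_ +i* _)%C ].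
Local Close Scope complex_scope.

Section Cabs.
Variable R : realType.
Implicit Types z w a : R[i].

Lemma cabs2_ge0 z : 0 <= cabs2 z.
Proof. case: z => a b; rewrite /cabs2 /=; nra. Qed.

Lemma cabs2_eq0 z : cabs2 z = 0 -> z = 0.
Proof.
case: z => a b; rewrite /cabs2 /= => h.
have ha : a = 0 by nra.
have hb : b = 0 by nra.
by rewrite ha hb.
Qed.

Lemma cabs2M a z : cabs2 (a * z) = cabs2 a * cabs2 z.
Proof. case: a => a1 a2; case: z => z1 z2; simpc; rewrite /cabs2 /=; ring. Qed.

Lemma cabs2D z w : cabs2 (z + w) <= 2 * (cabs2 z + cabs2 w).
Proof. case: z => a b; case: w => c d; simpc; rewrite /cabs2 /=; have := sqr_ge0 (a - c); have := sqr_ge0 (b - d); nra. Qed.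

Lemma cabs2N z : cabs2 (- z) = cabs2 z.
Proof. case: z => a b; simpc; rewrite /cabs2 /=; ring. Qed.

Lemma cabs2J z : cabs2 (z^*)%C = cabs2 z.
Proof. case: z => a b; simpc; rewrite /cabs2 /=; ring. Qed.

Lemma cabs2R (x : R) : cabs2 (x%:C)%C = x ^+ 2.
Proof. rewrite /cabs2 /=; ring. Qed.

Lemma cabs2_0 : cabs2 (0 : R[i]) = 0.
Proof. rewrite /cabs2 /=; ring. Qed.

Lemma cabs2B z w : cabs2 (z - w) = cabs2 (w - z).
Proof. by rewrite -cabs2N opprB. Qed.

Lemma mulcJ z : z * (z^*)%C = ((cabs2 z)%:C)%C.
Proof. case: z => a b; simpc; rewrite /cabs2 /=; apply/eqP; rewrite eq_complex /=; apply/andP; split; apply/eqP; ring. Qed.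

Lemma ReD z w : complex.Re (z + w) = complex.Re z + complex.Re w.
Proof. by case: z => ? ?; case: w => ? ?; simpc. Qed.
Lemma ImD z w : complex.Im (z + w) = complex.Im z + complex.Im w.
Proof. by case: z => ? ?; case: w => ? ?; simpc. Qed.
Lemma ReB z w : complex.Re (z - w) = complex.Re z - complex.Re w.
Proof. by case: z => ? ?; case: w => ? ?; simpc. Qed.
Lemma ImB z w : complex.Im (z - w) = complex.Im z - complex.Im w.
Proof. by case: z => ? ?; case: w => ? ?; simpc. Qed.

Lemma Re_sum (I : Type) (s : seq I) (F : I -> R[i]) :
  complex.Re (\sum_(i <- s) F i) = \sum_(i <- s) complex.Re (F i).
Proof. elim: s => [|x s IH]; first by rewrite !big_nil. by rewrite !big_cons ReD IH. Qed.
Lemma Im_sum (I : Type) (s : seq I) (F : I -> R[i]) :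
  complex.Im (\sum_(i <- s) F i) = \sum_(i <- s) complex.Im (F i).
Proof. elim: s => [|x s IH]; first by rewrite !big_nil. by rewrite !big_cons ImD IH. Qed.

Lemma cabs2_Re z : complex.Re z ^+ 2 <= cabs2 z.
Proof. case: z => a b; rewrite /cabs2 /=; nra. Qed.
Lemma cabs2_Im z : complex.Im z ^+ 2 <= cabs2 z.
Proof. case: z => a b; rewrite /cabs2 /=; nra. Qed.

Lemma cabs2_small z (e : R) : 0 < e -> `|complex.Re z| < Num.min 1 (e / 4) -> `|complex.Im z| < Num.min 1 (e/4) -> cabs2 z < e.
Proof.
case: z => a b /= e0; rewrite /cabs2 /= !lt_min => /andP[ha1 ha2] /andP[hb1 hb2].
have h1 : a ^+ 2 <= `|a|.
  have na := normr_ge0 a; have := real_normK (num_real a); nra.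
have h2 : b ^+ 2 <= `|b|.
  have na := normr_ge0 b; have := real_normK (num_real b); nra.
lra.
Qed.

End Cabs.
Section Sums.
Variables (R : realType) (S : eqType).
Implicit Types (h : S -> R) (f : S -> R[i]).

Definition psum h : R := sup [set y | exists s, uniq s /\ y = \sum_(x <- s) h x].
Definition bdd h := exists M, forall s, uniq s -> \sum_(x <- s) h x <= M.
Definition has_sumR h l := forall e : R, 0 < e -> exists s0 : seq S,
  forall s, uniq s -> {subset s0 <= s} -> `|\sum_(x <- s) h x - l| < e.
Definition has_sumC f l := forall e : R, 0 < e -> exists s0 : seq S,
  forall s, uniq s -> {subset s0 <= s} -> cabs2 (\sum_(x <- s) f x - l) < e.

Lemma subcat1 (a b : seq S) x : x \in a -> x \in a ++ b.
Proof. by rewrite mem_cat => ->. Qed.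
Lemma subcat2 (a b : seq S) x : x \in b -> x \in a ++ b.
Proof. by rewrite mem_cat => ->; rewrite orbT. Qed.
Lemma subundup1 (a b : seq S) x : x \in a -> x \in undup (a ++ b).
Proof. by rewrite mem_undup; apply: subcat1. Qed.
Lemma subundup2 (a b : seq S) x : x \in b -> x \in undup (a ++ b).
Proof. by rewrite mem_undup; apply: subcat2. Qed.

Lemma sum_sub_le h s0 s : (forall x, 0 <= h x) -> uniq s0 -> uniq s ->
  {subset s0 <= s} -> \sum_(x <- s0) h x <= \sum_(x <- s) h x.
Proof.
move=> h0 u0 u sub.
rewrite [X in _ <= X](bigID (fun x => x \in s0)) /= -[X in _ <= X + _]big_filter.
have -> : \sum_(i <- [seq i <- s | i \in s0]) h i = \sum_(x <- s0) h x.
  apply: perm_big; apply: uniq_perm => //.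
    exact: filter_uniq.
  by move=> x; rewrite mem_filter; apply/andP/idP => [[]//|xs0]; split => //; apply: sub.
by rewrite lerDl sumr_ge0.
Qed.

Lemma psum_ub h s : bdd h -> uniq s -> \sum_(x <- s) h x <= psum h.
Proof.
move=> [M hM] us; apply: sup_upper_bound; last by exists s.
split; first by exists 0, [::]; rewrite big_nil.
by exists M => y [t [ut ->]]; apply: hM.
Qed.

Lemma psum_ge0 h : bdd h -> 0 <= psum h.
Proof. by move=> hb; have := psum_ub hb (isT : uniq [::]); rewrite big_nil. Qed.

Lemma psum_le h M : (forall s, uniq s -> \sum_(x <- s) h x <= M) -> psum h <= M.
Proof.
move=> hM; apply: ge_sup; first by exists 0, [::]; rewrite big_nil.
by move=> y [t [ut ->]]; apply: hM.
Qed.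

Lemma psum_has h : (forall x, 0 <= h x) -> bdd h -> has_sumR h (psum h).
Proof.
move=> h0 hb e e0.
have hs : has_sup [set y | exists s, uniq s /\ y = \sum_(x <- s) h x].
  case: hb => M hM; split; first by exists 0, [::]; rewrite big_nil.
  by exists M => y [t [ut ->]]; apply: hM.
have [y [s0 [u0 ->]] hy] := sup_adherent e0 hs.
exists s0 => s us sub.
have h1 := sum_sub_le h0 u0 us sub.
have h2 := psum_ub hb us.
rewrite /psum in h2 hy *.
rewrite ler0_norm ?subr_le0 //; lra.
Qed.

Lemma has_sumR_ext h1 h2 l : (forall x, h1 x = h2 x) -> has_sumR h1 l -> has_sumR h2 l.
Proof.
move=> e hs eps eps0; have [s0 hs0] := hs eps eps0; exists s0 => s us sub.
by rewrite -(eq_bigr _ (fun x _ => e x)); apply: hs0.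
Qed.

Lemma has_sumR_sub h1 h2 l1 l2 : has_sumR h1 l1 -> has_sumR h2 l2 ->
  has_sumR (fun x => h1 x - h2 x) (l1 - l2).
Proof.
move=> hs1 hs2 e e0.
have e20 : 0 < e / 2 by rewrite divr_gt0.
have [s1 H1] := hs1 _ e20; have [s2 H2] := hs2 _ e20.
exists (s1 ++ s2) => s us sub.
have := H1 s us (fun x hx => sub x (@subcat1 _ _ x hx)).
have := H2 s us (fun x hx => sub x (@subcat2 _ _ x hx)).
rewrite big_split /= sumrN => a b.
have -> : \sum_(i <- s) h1 i - \sum_(i <- s) h2 i - (l1 - l2) =
   (\sum_(i <- s) h1 i - l1) - (\sum_(i <- s) h2 i - l2) by ring.
apply: (le_lt_trans (ler_normB _ _)); lra.
Qed.

Lemma absum_has h : (exists M, forall s, uniq s -> \sum_(x <- s) `|h x| <= M) ->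
  exists l, has_sumR h l.
Proof.
move=> [M hM].
pose p x := (`|h x| + h x) / 2; pose n x := (`|h x| - h x) / 2.
have hp x : 0 <= p x /\ p x <= `|h x|.
  rewrite /p; have := ler_norm (h x); have := ler_norm (- h x); rewrite normrN; lra.
have hn x : 0 <= n x /\ n x <= `|h x|.
  rewrite /n; have := ler_norm (h x); have := ler_norm (- h x); rewrite normrN; lra.
have bp : bdd p.
  exists M => s us; apply: le_trans (hM s us); apply: ler_sum => x _; exact: (hp x).2.
have bn : bdd n.
  exists M => s us; apply: le_trans (hM s us); apply: ler_sum => x _; exact: (hn x).2.
exists (psum p - psum n).
apply: has_sumR_ext (has_sumR_sub (psum_has (fun x => (hp x).1) bp) (psum_has (fun x => (hn x).1) bn)).
by move=> x; rewrite /p /n; field.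
Qed.

Lemma has_sumC_of f a b : has_sumR (fun x => complex.Re (f x)) a ->
  has_sumR (fun x => complex.Im (f x)) b -> has_sumC f (a +i* b)%C.
Proof.
move=> ha hb e e0.
have e1 : 0 < Num.min 1 (e / 4) by rewrite lt_min ltr01 divr_gt0.
have [s1 H1] := ha _ e1; have [s2 H2] := hb _ e1.
exists (s1 ++ s2) => s us sub.
apply: cabs2_small => //.
  by rewrite ReB Re_sum /=; apply: H1 => // x hx; apply: sub; rewrite mem_cat hx.
by rewrite ImB Im_sum /=; apply: H2 => // x hx; apply: sub; rewrite mem_cat hx orbT.
Qed.

Lemma forall_small (x : R) : (forall e, 0 < e -> x < e) -> x <= 0.
Proof.
move=> h; rewrite leNgt; apply/negP => x0.
have := h (x / 2); rewrite divr_gt0 // => /(_ isT); lra.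
Qed.

Lemma has_sumC_uniq f l1 l2 : has_sumC f l1 -> has_sumC f l2 -> l1 = l2.
Proof.
move=> h1 h2; apply/eqP; rewrite -subr_eq0; apply/eqP/cabs2_eq0.
apply/le_anti; rewrite cabs2_ge0 andbT; apply: forall_small => e e0.
have e4 : 0 < e / 4 by rewrite divr_gt0.
have [s1 H1] := h1 _ e4; have [s2 H2] := h2 _ e4.
set s := undup (s1 ++ s2).
have us : uniq s by apply: undup_uniq.
have := H1 s us (fun x hx => @subundup1 _ _ x hx).
have := H2 s us (fun x hx => @subundup2 _ _ x hx).
move=> a b.
have := cabs2D (l1 - \sum_(x <- s) f x) (\sum_(x <- s) f x - l2).
rewrite cabs2B. have -> : l1 - \sum_(x <- s) f x + (\sum_(x <- s) f x - l2) = l1 - l2 by ring.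
lra.
Qed.

Lemma has_sumC_lin f g a l1 l2 : has_sumC f l1 -> has_sumC g l2 ->
  has_sumC (fun x => a * f x + g x) (a * l1 + l2).
Proof.
move=> h1 h2 e e0.
have ca := cabs2_ge0 a.
have e1 : 0 < e / (4 * (cabs2 a + 1)) by rewrite divr_gt0 // mulr_gt0 //; lra.
have e4 : 0 < e / 4 by rewrite divr_gt0.
have [s1 H1] := h1 _ e1; have [s2 H2] := h2 _ e4.
exists (s1 ++ s2) => s us sub.
have := H1 s us (fun x hx => sub x (@subcat1 _ _ x hx)).
have := H2 s us (fun x hx => sub x (@subcat2 _ _ x hx)).
move=> B A.
rewrite big_split /= -mulr_sumr.
have -> : a * \sum_(i <- s) f i + \sum_(i <- s) g i - (a * l1 + l2) =
  a * (\sum_(i <- s) f i - l1) + (\sum_(i <- s) g i - l2) by ring.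
apply: le_lt_trans (cabs2D _ _) _.
rewrite cabs2M.
have hA : cabs2 a * cabs2 (\sum_(i <- s) f i - l1) <= cabs2 a * (e / (4 * (cabs2 a + 1))).
  by apply: ler_wpM2l => //; apply: ltW.
have : cabs2 a * (e / (4 * (cabs2 a + 1))) <= e / 4.
  rewrite mulrA ler_pdivrMr ?mulr_gt0 //; last lra.
  rewrite mulrC -mulrA ler_pM2l //; lra.
have := cabs2_ge0 (\sum_(i <- s) f i - l1).
lra.
Qed.

Lemma has_sumC_conj f l : has_sumC f l -> has_sumC (fun x => (f x)^*%C) (l^*%C).
Proof.
move=> h e e0; have [s0 H] := h e e0; exists s0 => s us sub.
by rewrite -rmorph_sum -rmorphB cabs2J; apply: H.
Qed.

Lemma has_sumR0 : has_sumR (fun _ => 0) 0.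
Proof. by move=> e e0; exists [::] => s _ _; rewrite big1 // subrr normr0. Qed.

Lemma has_sumC_real h : (forall x, 0 <= h x) -> bdd h ->
  has_sumC (fun x => (h x)%:C%C) (psum h)%:C%C.
Proof.
move=> h0 hb; apply: has_sumC_of => /=; first exact: psum_has.
exact: has_sumR0.
Qed.

Lemma has_sumC_reindex f l (sigma tau : S -> S) : cancel sigma tau -> cancel tau sigma ->
  has_sumC f l -> has_sumC (fun x => f (sigma x)) l.
Proof.
move=> st ts h e e0; have [s0 H] := h e e0.
exists (map tau s0) => s us sub.
rewrite -(big_map sigma xpredT f); apply: H.
  by rewrite map_inj_uniq //; apply: can_inj st.
move=> x hx; rewrite -[x]ts; apply: map_f; apply: sub; exact: map_f.
Qed.

End Sums.
Section L2.
Variables (R : realType) (S : eqType).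
Local Notation C := R[i].

Record l2 := L2 { l2f :> S -> C ; l2P : in_l2 l2f }.

Lemma l2_ext (u v : l2) : (forall x, u x = v x) -> u = v.
Proof.
case: u => f hf; case: v => g hg /= /funext e; subst g.
by rewrite (Prop_irrelevance hf hg).
Qed.

Lemma in_l2_0 : in_l2 (fun _ : S => 0 : C).
Proof. by exists 0 => s _; rewrite big1 // => x _; rewrite cabs2_0. Qed.

Lemma in_l2_add (f g : S -> C) : in_l2 f -> in_l2 g -> in_l2 (fun x => f x + g x).
Proof.
move=> [M1 h1] [M2 h2]; exists (2 * (M1 + M2)) => s us.
apply: le_trans (_ : \sum_(x <- s) 2 * (cabs2 (f x) + cabs2 (g x)) <= _).
  by apply: ler_sum => x _; apply: cabs2D.
rewrite -mulr_sumr big_split /= ler_pM2l ?ltr0Sn //.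
by apply: lerD; [apply: h1 | apply: h2].
Qed.

Lemma in_l2_opp (f : S -> C) : in_l2 f -> in_l2 (fun x => - f x).
Proof.
by move=> [M h]; exists M => s us; under eq_bigr do rewrite cabs2N; apply: h.
Qed.

Lemma in_l2_scale (a : C) (f : S -> C) : in_l2 f -> in_l2 (fun x => a * f x).
Proof.
move=> [M h]; exists (cabs2 a * M) => s us.
under eq_bigr do rewrite cabs2M; rewrite -mulr_sumr ler_wpM2l ?cabs2_ge0 //.
exact: h.
Qed.

Definition l2_zero := L2 in_l2_0.
Definition l2_add (u v : l2) := L2 (in_l2_add (l2P u) (l2P v)).
Definition l2_opp (u : l2) := L2 (in_l2_opp (l2P u)).
Definition l2_scale (a : C) (u : l2) := L2 (in_l2_scale a (l2P u)).

Lemma l2_addA : associative l2_add.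
Proof. by move=> u v w; apply: l2_ext => x /=; rewrite addrA. Qed.
Lemma l2_addC : commutative l2_add.
Proof. by move=> u v; apply: l2_ext => x /=; rewrite addrC. Qed.
Lemma l2_add0 : left_id l2_zero l2_add.
Proof. by move=> u; apply: l2_ext => x /=; rewrite add0r. Qed.
Lemma l2_addN : left_inverse l2_zero l2_opp l2_add.
Proof. by move=> u; apply: l2_ext => x /=; rewrite addNr. Qed.

HB.instance Definition _ := gen_eqMixin l2.
HB.instance Definition _ := gen_choiceMixin l2.
HB.instance Definition _ := GRing.isZmodule.Build l2 l2_addA l2_addC l2_add0 l2_addN.

Lemma l2_scaleA a b (v : l2) : l2_scale a (l2_scale b v) = l2_scale (a * b) v.
Proof. by apply: l2_ext => x /=; rewrite mulrA. Qed.
Lemma l2_scale1 : left_id 1 l2_scale.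
Proof. by move=> v; apply: l2_ext => x /=; rewrite mul1r. Qed.
Lemma l2_scaleDr : right_distributive l2_scale +%R.
Proof. by move=> a u v; apply: l2_ext => x /=; rewrite mulrDr. Qed.
Lemma l2_scaleDl (v : l2) : {morph l2_scale^~ v: a b / a + b}.
Proof. by move=> a b; apply: l2_ext => x /=; rewrite mulrDl. Qed.

HB.instance Definition _ := GRing.Zmodule_isLmodule.Build C l2 l2_scaleA l2_scale1 l2_scaleDr l2_scaleDl.

Lemma l2E_add (u v : l2) x : (u + v) x = u x + v x. Proof. by []. Qed.
Lemma l2E_opp (u : l2) x : (- u) x = - u x. Proof. by []. Qed.
Lemma l2E_sub (u v : l2) x : (u - v) x = u x - v x. Proof. by []. Qed.
Lemma l2E_scale a (u : l2) x : (a *: u) x = a * u x. Proof. by []. Qed.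
Lemma l2E_0 x : (0 : l2) x = 0. Proof. by []. Qed.
Lemma l2E_sum (I : Type) (s : seq I) (F : I -> l2) x :
  (\sum_(i <- s) F i) x = \sum_(i <- s) F i x.
Proof.
elim: s => [|i s IH]; first by rewrite !big_nil.
by rewrite !big_cons l2E_add IH.
Qed.

End L2.
Section Dot.
Variables (R : realType) (S : eqType).
Local Notation C := R[i].
Local Notation V := (l2 R S).

Definition sumR (h : S -> R) : R :=
  match pselect (exists l, has_sumR h l) with
  | left H => proj1_sig (cid H)
  | right _ => 0
  end.

Lemma sumR_has h : (exists l, has_sumR h l) -> has_sumR h (sumR h).
Proof.
rewrite /sumR; case: pselect => // H _; exact: (proj2_sig (cid H)).
Qed.

Definition dotf (u v : V) x := u x * (v x)^*%C.

Definition dot (u v : V) : C :=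
  (sumR (fun x => complex.Re (dotf u v x)) +i* sumR (fun x => complex.Im (dotf u v x)))%C.

Lemma abs_ReJ (z w : C) : `|complex.Re (z * w^*%C)| <= cabs2 z + cabs2 w.
Proof.
case: z => a b; case: w => c d; simpc; rewrite /cabs2 /=.
have := sqr_ge0 (a - c); have := sqr_ge0 (b - d); have := sqr_ge0 (a + c); have := sqr_ge0 (b + d).
rewrite ler_norml; move=> *; apply/andP; split; nra.
Qed.

Lemma abs_ImJ (z w : C) : `|complex.Im (z * w^*%C)| <= cabs2 z + cabs2 w.
Proof.
case: z => a b; case: w => c d; simpc; rewrite /cabs2 /=.
have := sqr_ge0 (a - d); have := sqr_ge0 (b - c); have := sqr_ge0 (a + d); have := sqr_ge0 (b + c).
rewrite ler_norml; move=> *; apply/andP; split; nra.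
Qed.

Lemma conjMJ (z w : C) : (z * w^*%C)^*%C = w * z^*%C.
Proof.
case: z => a b; case: w => c d; simpc; apply/eqP; rewrite eq_complex /=.
by apply/andP; split; apply/eqP; ring.
Qed.

Lemma dot_has u v : has_sumC (dotf u v) (dot u v).
Proof.
have [M1 h1] := l2P u; have [M2 h2] := l2P v.
apply: has_sumC_of; apply: sumR_has; apply: absum_has; exists (M1 + M2) => s us.
  apply: le_trans (_ : \sum_(x <- s) (cabs2 (u x) + cabs2 (v x)) <= _).
    by apply: ler_sum => x _; apply: abs_ReJ.
  by rewrite big_split /= lerD ?h1 ?h2.
apply: le_trans (_ : \sum_(x <- s) (cabs2 (u x) + cabs2 (v x)) <= _).
  by apply: ler_sum => x _; apply: abs_ImJ.
by rewrite big_split /= lerD ?h1 ?h2.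
Qed.

Lemma has_sumC_ext (f g : S -> C) l : (forall x, f x = g x) -> has_sumC f l -> has_sumC g l.
Proof.
move=> e hs eps eps0; have [s0 hs0] := hs eps eps0; exists s0 => s us sub.
by rewrite -(eq_bigr _ (fun x _ => e x)); apply: hs0.
Qed.

Lemma dot_eq (u v : V) l : has_sumC (dotf u v) l -> dot u v = l.
Proof. by move=> h; apply: has_sumC_uniq (dot_has u v) h. Qed.

Lemma bdd_l2 (u : V) : bdd (fun x => cabs2 (u x)).
Proof. exact: l2P. Qed.

Lemma dot_self (u : V) : dot u u = (psum (fun x => cabs2 (u x)))%:C%C.
Proof.
apply: dot_eq; apply: has_sumC_ext (has_sumC_real (fun x => cabs2_ge0 _) (bdd_l2 u)).
by move=> x; rewrite /dotf mulcJ.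
Qed.

Lemma hnorm2E (u : V) : hnorm2 dot u = psum (fun x => cabs2 (u x)).
Proof. by rewrite /hnorm2 dot_self. Qed.

Lemma dot_inner : is_inner_product dot.
Proof.
split.
- move=> a u v w; apply: dot_eq.
  apply: has_sumC_ext (has_sumC_lin a (dot_has u w) (dot_has v w)).
  by move=> x; rewrite /dotf l2E_add l2E_scale mulrDl mulrA.
- move=> u v; apply: dot_eq; apply: has_sumC_ext (has_sumC_conj (dot_has u v)).
  by move=> x; rewrite /dotf conjMJ.
- by move=> u; rewrite dot_self ler0c; apply: psum_ge0; apply: bdd_l2.
- move=> u; rewrite dot_self => /complexI h0; apply: l2_ext => x; rewrite l2E_0.
  apply: cabs2_eq0; apply/le_anti; rewrite cabs2_ge0 andbT -h0.
  have := psum_ub (bdd_l2 u) (isT : uniq [:: x]); by rewrite big_seq1.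
Qed.

Lemma cabs2_le_hnorm2 (u : V) x : cabs2 (u x) <= hnorm2 dot u.
Proof. by rewrite hnorm2E; have := psum_ub (bdd_l2 u) (isT : uniq [:: x]); rewrite big_seq1. Qed.

End Dot.
Section Complete.
Variable R : realType.

Definition liminfR (a : nat -> R) := sup (fun y : R => exists N, forall n, (N <= n)%N -> y <= a n).

Lemma cauchyR (a : nat -> R) :
  (forall e : R, 0 < e -> exists N, forall m n, (N <= m)%N -> (N <= n)%N -> `|a m - a n| < e) ->
  forall e : R, 0 < e -> exists N, forall n, (N <= n)%N -> `|a n - liminfR a| < e.
Proof.
move=> hc e e0.
have e2 : 0 < e / 3 by rewrite divr_gt0.
have [N HN] := hc _ e2.
have hN n : (N <= n)%N -> a N - e / 3 <= a n /\ a n <= a N + e / 3.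
  move=> Nn; have := HN n N Nn (leqnn N); rewrite ltr_norml => /andP[]; lra.
set E := (fun y : R => exists N, forall n, (N <= n)%N -> y <= a n).
have EaN : E (a N - e / 3) by exists N => n Nn; exact: (hN n Nn).1.
have ub : ubound E (a N + e / 3).
  move=> y [M HM]; have := HM (maxn M N) (leq_maxl _ _).
  have := (hN (maxn M N) (leq_maxr _ _)).2; lra.
have hs : has_sup E by split; [exists (a N - e / 3) | exists (a N + e / 3)].
have l1 : a N - e / 3 <= liminfR a by apply: sup_upper_bound.
have l2 : liminfR a <= a N + e / 3 by apply: ge_sup => //; exists (a N - e / 3).
exists N => n Nn; have [h1 h2] := hN n Nn.
rewrite ltr_norml; apply/andP; split; lra.
Qed.

Lemma finite_small (S : eqType) (c : nat -> S -> R) (s : seq S) :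
  (forall x (d : R), 0 < d -> exists N, forall n, (N <= n)%N -> c n x < d) ->
  forall d : R, 0 < d -> exists N, forall n, (N <= n)%N -> \sum_(x <- s) c n x < d.
Proof.
move=> hc; elim: s => [|x s IH] d d0.
  by exists 0%N => n _; rewrite big_nil.
have d2 : 0 < d / 2 by rewrite divr_gt0.
have [N1 H1] := hc x _ d2; have [N2 H2] := IH _ d2.
exists (maxn N1 N2) => n hn; rewrite big_cons.
have := H1 n (leq_trans (leq_maxl _ _) hn); have := H2 n (leq_trans (leq_maxr _ _) hn).
lra.
Qed.

Lemma sq_lt (t e : R) : 0 < e -> t ^+ 2 < e * e -> `|t| < e.
Proof.
move=> e0 h; rewrite ltNge; apply/negP => he.
have := real_normK (num_real t); have := normr_ge0 t; nra.
Qed.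

Variable S : eqType.
Local Notation V := (l2 R S).

Lemma l2_complete : is_complete (@dot R S).
Proof.
move=> u hC.
have ptC x : forall e : R, 0 < e -> exists N, forall m n, (N <= m)%N -> (N <= n)%N ->
    cabs2 (u m x - u n x) < e.
  move=> e e0; have [N HN] := hC e e0; exists N => m n hm hn.
  apply: le_lt_trans (HN m n hm hn); rewrite -l2E_sub; exact: cabs2_le_hnorm2.
pose v0 x := (liminfR (fun n => complex.Re (u n x)) +i* liminfR (fun n => complex.Im (u n x)))%C.
have ptconv x (d : R) : 0 < d -> exists N, forall n, (N <= n)%N -> cabs2 (u n x - v0 x) < d.
  move=> d0.
  have d1 : 0 < Num.min 1 (d / 4) by rewrite lt_min ltr01 divr_gt0.
  have cR : forall e : R, 0 < e -> exists N, forall m n, (N <= m)%N -> (N <= n)%N ->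
      `|complex.Re (u m x) - complex.Re (u n x)| < e.
    move=> e e0; have [N HN] := ptC x (e * e) (mulr_gt0 e0 e0); exists N => m n hm hn.
    apply: sq_lt => //; rewrite -ReB; apply: le_lt_trans (HN m n hm hn); exact: cabs2_Re.
  have cI : forall e : R, 0 < e -> exists N, forall m n, (N <= m)%N -> (N <= n)%N ->
      `|complex.Im (u m x) - complex.Im (u n x)| < e.
    move=> e e0; have [N HN] := ptC x (e * e) (mulr_gt0 e0 e0); exists N => m n hm hn.
    apply: sq_lt => //; rewrite -ImB; apply: le_lt_trans (HN m n hm hn); exact: cabs2_Im.
  have [N1 H1] := cauchyR cR d1; have [N2 H2] := cauchyR cI d1.
  exists (maxn N1 N2) => n hn; apply: cabs2_small => //.
    by rewrite ReB; apply: H1; apply: leq_trans hn; apply: leq_maxl.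
  by rewrite ImB; apply: H2; apply: leq_trans hn; apply: leq_maxr.
have stepB e : 0 < e -> exists N, forall n, (N <= n)%N -> forall s, uniq s ->
    \sum_(x <- s) cabs2 (u n x - v0 x) <= 4 * e.
  move=> e0; have [N HN] := hC e e0; exists N => n hn s us.
  have [N' HN'] := @finite_small _ (fun m x => cabs2 (u m x - v0 x)) s ptconv _ e0.
  set m := maxn N N'.
  have hm1 : (N <= m)%N by apply: leq_maxl.
  have hm2 : (N' <= m)%N by apply: leq_maxr.
  apply: le_trans (_ : \sum_(x <- s) 2 * (cabs2 (u n x - u m x) + cabs2 (u m x - v0 x)) <= _).
    apply: ler_sum => x _.
    have -> : u n x - v0 x = (u n x - u m x) + (u m x - v0 x) by ring.
    exact: cabs2D.
  rewrite -mulr_sumr big_split /=.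
  have A : \sum_(x <- s) cabs2 (u n x - u m x) <= hnorm2 (@dot R S) (u n - u m).
    rewrite hnorm2E; apply: le_trans (psum_ub (bdd_l2 _) us); by [].
  have := HN n m hn hm1; have := HN' m hm2.
  lra.
have v0l2 : in_l2 v0.
  have [N HN] := stepB 1 ltr01.
  have [M HM] := l2P (u N).
  exists (2 * (4 + M)) => s us.
  apply: le_trans (_ : \sum_(x <- s) 2 * (cabs2 (u N x - v0 x) + cabs2 (u N x)) <= _).
    apply: ler_sum => x _.
    rewrite {1}(_ : v0 x = - (u N x - v0 x) + u N x); last by ring.
    apply: le_trans (cabs2D _ _) _; by rewrite cabs2N.
  rewrite -mulr_sumr big_split /= ler_pM2l ?ltr0Sn //.
  have := HN N (leqnn N) s us; have := HM s us; lra.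
exists (L2 v0l2) => e e0.
have e8 : 0 < e / 8 by rewrite divr_gt0.
have [N HN] := stepB _ e8; exists N => n hn.
rewrite hnorm2E; apply: le_lt_trans (psum_le (HN n hn)) _; lra.
Qed.

End Complete.
Section Rep.
Variables (R : realType) (G : groupType) (S : eqType) (act : G -> S -> S).
Hypothesis hact : is_action act.
Local Notation C := R[i].
Local Notation V := (l2 R S).

Lemma act_K g : cancel (act g) (act g^-1%g).
Proof. by move=> x; rewrite -hact.2 mulVg hact.1. Qed.
Lemma act_Kv g : cancel (act g^-1%g) (act g).
Proof. by move=> x; rewrite -hact.2 mulgV hact.1. Qed.

Lemma in_l2_qr g (f : S -> C) : in_l2 f -> in_l2 (quasi_regular act g f).
Proof.
move=> [M hM]; exists M => s us; rewrite /quasi_regular.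
rewrite -(big_map (act g^-1%g) xpredT (fun y => cabs2 (f y))); apply: hM.
by rewrite map_inj_uniq //; apply: can_inj (act_Kv g).
Qed.

Definition qpi g (u : V) : V := L2 (in_l2_qr g (l2P u)).

Lemma piE g (u : V) x : qpi g u x = u (act g^-1%g x). Proof. by []. Qed.

Lemma pi_unitary : unitary_rep (@dot R S) qpi.
Proof.
split.
- by move=> g a u v; apply: l2_ext => x.
- move=> g u v; apply: dot_eq.
  exact: (has_sumC_reindex (act_Kv g) (act_K g) (dot_has u v)).
- by move=> u; apply: l2_ext => x; rewrite piE invg1 hact.1.
- by move=> g h u; apply: l2_ext => x; rewrite !piE invgM hact.2.
Qed.

End Rep.
Section Inner.
Variables (R : realType) (V : lmodType R[i]) (dot : V -> V -> R[i]).
Hypothesis hip : is_inner_product dot.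
Local Notation C := R[i].

Lemma ip1 (a : C) u v w : dot (a *: u + v) w = a * dot u w + dot v w.
Proof. by case: hip => h _ _ _; apply: h. Qed.
Lemma ip2 u v : dot v u = (dot u v)^*%C.
Proof. by case: hip => _ h _ _; apply: h. Qed.
Lemma ip3 u : 0 <= dot u u.
Proof. by case: hip => _ _ h _; apply: h. Qed.
Lemma ip4 u : dot u u = 0 -> u = 0.
Proof. by case: hip => _ _ _ h; apply: h. Qed.

Lemma dot0l w : dot 0 w = 0.
Proof.
have := ip1 1 0 0 w; rewrite scaler0 !addr0 mul1r => h.
by apply: (addrI (dot 0 w)); rewrite addr0 -h.
Qed.
Lemma dotDl u v w : dot (u + v) w = dot u w + dot v w.
Proof. by have := ip1 1 u v w; rewrite scale1r mul1r. Qed.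
Lemma dotZl a u w : dot (a *: u) w = a * dot u w.
Proof. by have := ip1 a u 0 w; rewrite addr0 dot0l addr0. Qed.
Lemma dotNl u w : dot (- u) w = - dot u w.
Proof. by rewrite -scaleN1r dotZl mulN1r. Qed.
Lemma dotBl u v w : dot (u - v) w = dot u w - dot v w.
Proof. by rewrite dotDl dotNl. Qed.
Lemma dotC u v : dot v u = (dot u v)^*%C.
Proof. exact: ip2. Qed.
Lemma cjD (z w : C) : (z + w)^*%C = z^*%C + w^*%C.
Proof. by case: z => ? ?; case: w => ? ?; simpc; apply/eqP; rewrite eq_complex /= opprD !eqxx. Qed.
Lemma cjM (z w : C) : (z * w)^*%C = z^*%C * w^*%C.
Proof. case: z => ? ?; case: w => ? ?; simpc; apply/eqP; rewrite eq_complex /=; apply/andP; split; apply/eqP; ring. Qed.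
Lemma cjN (z : C) : (- z)^*%C = - z^*%C.
Proof. case: z => a b /=; simpc; reflexivity. Qed.
Lemma dot0r w : dot w 0 = 0.
Proof. by rewrite dotC dot0l conjc0. Qed.
Lemma dotDr u v w : dot w (u + v) = dot w u + dot w v.
Proof. by rewrite (dotC (u + v)) dotDl cjD -!dotC. Qed.
Lemma dotZr a u w : dot w (a *: u) = a^*%C * dot w u.
Proof. by rewrite (dotC (a *: u)) dotZl cjM -dotC. Qed.
Lemma dotNr u w : dot w (- u) = - dot w u.
Proof. by rewrite (dotC (- u)) dotNl cjN -dotC. Qed.
Lemma dotBr u v w : dot w (u - v) = dot w u - dot w v.
Proof. by rewrite dotDr dotNr. Qed.
Lemma dot_suml (I : Type) (s : seq I) (F : I -> V) w :
  dot (\sum_(i <- s) F i) w = \sum_(i <- s) dot (F i) w.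
Proof.
elim: s => [|i s IH]; first by rewrite !big_nil dot0l.
by rewrite !big_cons dotDl IH.
Qed.
Lemma dot_sumr (I : Type) (s : seq I) (F : I -> V) w :
  dot w (\sum_(i <- s) F i) = \sum_(i <- s) dot w (F i).
Proof.
elim: s => [|i s IH]; first by rewrite !big_nil dot0r.
by rewrite !big_cons dotDr IH.
Qed.

Lemma dot_selfE u : dot u u = (hnorm2 dot u)%:C%C.
Proof.
have := ip3 u; rewrite lecE /= => /andP[/eqP h _].
rewrite /hnorm2; case: (dot u u) h => a b /= -> //.
Qed.

Lemma hnorm2_ge0 u : 0 <= hnorm2 dot u.
Proof. by have := ip3 u; rewrite dot_selfE ler0c. Qed.

Lemma hnorm2_eq0 u : hnorm2 dot u = 0 -> u = 0.
Proof. by move=> h; apply: ip4; rewrite dot_selfE h. Qed.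

Lemma conjR (x : R) : (x%:C)^*%C = x%:C%C.
Proof. exact: conjc_real. Qed.

Lemma dot_expand a b u v :
  dot (a *: u - b *: v) (a *: u - b *: v) =
  a * a^*%C * dot u u - a * b^*%C * dot u v - b * a^*%C * dot v u + b * b^*%C * dot v v.
Proof. rewrite dotBl !dotBr !dotZl !dotZr; ring. Qed.

Local Open Scope complex_scope.
Lemma cauchy_schwarz u v : cabs2 (dot u v) <= hnorm2 dot u * hnorm2 dot v.
Proof.
have [hv0|hvp] := eqVneq (hnorm2 dot v) 0.
  by rewrite (hnorm2_eq0 hv0) dot0r cabs2_0 /hnorm2 dot0r mulr0.
have hvg : 0 < hnorm2 dot v by rewrite lt_def hvp hnorm2_ge0.
set hv := hnorm2 dot v; set hu := hnorm2 dot u; set d := dot u v.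
have := hnorm2_ge0 ((hv%:C)%C *: u - d *: v).
rewrite /hnorm2 dot_expand conjR (dotC u v) -/d !dot_selfE -/hu -/hv.
have -> : hv%:C * hv%:C * hu%:C - hv%:C * d^* * d - d * hv%:C * d^* + d * d^* * hv%:C
   = (hv%:C * hv%:C * hu%:C - hv%:C * (d * d^*)) by ring.
rewrite mulcJ -!rmorphM -rmorphB /= => h.
have : 0 <= hv * (hv * hu - cabs2 d) by rewrite mulrBr mulrA.
rewrite pmulr_rge0 // subr_ge0 mulrC //.
Qed.
Local Close Scope complex_scope.

End Inner.
Section Harmonic.
Variables (R : realType) (G : groupType) (V : lmodType R[i]) (dot : V -> V -> R[i]).
Hypothesis hip : is_inner_product dot.
Variable pi : G -> V -> V.
Hypothesis hpi : unitary_rep dot pi.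
Local Notation C := R[i].
Local Open Scope complex_scope.

Lemma u_lin g (a : C) u v : pi g (a *: u + v) = a *: pi g u + pi g v.
Proof. by case: hpi => h _ _ _; apply: h. Qed.
Lemma u_dot g u v : dot (pi g u) (pi g v) = dot u v.
Proof. by case: hpi => _ h _ _; apply: h. Qed.
Lemma u_1 u : pi 1%g u = u.
Proof. by case: hpi => _ _ h _; apply: h. Qed.
Lemma u_M g h u : pi (g * h)%g u = pi g (pi h u).
Proof. by case: hpi => _ _ _ h'; apply: h'. Qed.

Lemma u_0 g : pi g 0 = 0.
Proof.
have := u_lin g 1 0 0; rewrite scaler0 addr0 scale1r => h.
by apply: (addrI (pi g 0)); rewrite addr0 -h.
Qed.
Lemma u_N g u : pi g (- u) = - pi g u.
Proof. by have := u_lin g (-1) u 0; rewrite addr0 u_0 addr0 !scaleN1r. Qed.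
Lemma u_B g u v : pi g (u - v) = pi g u - pi g v.
Proof. by have := u_lin g 1 u (- v); rewrite !scale1r u_N. Qed.
Lemma u_VK g u : pi g (pi g^-1%g u) = u.
Proof. by rewrite -u_M mulgV u_1. Qed.
Lemma u_adj g u v : dot u (pi g v) = dot (pi g^-1%g u) v.
Proof. by rewrite -[RHS](u_dot g) u_VK. Qed.

Variable B : G -> V.
Hypothesis hB : cocycle pi B.

Lemma B1 : B 1%g = 0.
Proof.
have := hB 1%g 1%g; rewrite mulg1 u_1 => h.
by apply: (addrI (B 1%g)); rewrite addr0 -h.
Qed.
Lemma BV g : B g^-1%g = - pi g^-1%g (B g).
Proof.
have := hB g^-1%g g; rewrite mulVg B1 => h.
by rewrite -[LHS]subr0 h opprD addrA subrr sub0r.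
Qed.

Lemma ReRM (x : R) (z : C) : complex.Re (x%:C * z) = x * complex.Re z.
Proof. case: z => a b; simpc; rewrite /=; ring. Qed.
Lemma cj_sum (I : Type) (s : seq I) (F : I -> C) : (\sum_(i <- s) F i)^*%C = \sum_(i <- s) (F i)^*%C.
Proof.
elim: s => [|i s IH]; first by rewrite !big_nil conjc0.
by rewrite !big_cons cjD IH.
Qed.

Variable mu : G -> R.
Hypothesis hmu : sym_fin_gen_prob mu.
Hypothesis harm : forall s, supp_list mu s -> \sum_(g <- s) (mu g)%:C *: B g = 0.

Lemma mu_sym g : mu g^-1%g = mu g.
Proof. by case: hmu => _ _ h _; apply: h. Qed.
Lemma mu_ge0 g : 0 <= mu g.
Proof. by case: hmu => h _ _ _; apply: h. Qed.

Lemma supp_inv s : supp_list mu s -> supp_list mu (map (fun g => g^-1%g) s).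
Proof.
move=> [us hs]; split; first by rewrite map_inj_uniq //; apply: invg_inj.
move=> g hg; rewrite -[g]invgK; apply: map_f; apply: hs; by rewrite mu_sym.
Qed.

Lemma key_zero s v : supp_list mu s ->
  \sum_(g <- s) (mu g)%:C * dot (B g) (pi g v - v) = 0.
Proof.
move=> hs.
have E1 : \sum_(g <- s) (mu g)%:C * dot (B g) v = 0.
  transitivity (dot (\sum_(g <- s) (mu g)%:C *: B g) v); last by rewrite harm // (dot0l hip).
  by rewrite (dot_suml hip); apply: eq_bigr => g _; rewrite (dotZl hip).
have E2 : \sum_(g <- s) (mu g)%:C * dot (B g) (pi g v) = 0.
  transitivity (- dot (\sum_(h <- map (fun g => g^-1%g) s) (mu h)%:C *: B h) v).
    rewrite big_map (dot_suml hip) -sumrN.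
    apply: eq_bigr => g _; rewrite u_adj (dotZl hip) BV (dotNl hip) mu_sym.
    by rewrite mulrN opprK.
  by rewrite harm ?(dot0l hip) ?oppr0 //; apply: supp_inv.
transitivity (\sum_(g <- s) (mu g)%:C * dot (B g) (pi g v) - \sum_(g <- s) (mu g)%:C * dot (B g) v);
  last by rewrite E1 E2 subr0.
rewrite -sumrB; apply: eq_bigr => g _.
by rewrite (dotBr hip) mulrBr.
Qed.

Lemma key_ineq s v : supp_list mu s ->
  \sum_(g <- s) mu g * hnorm2 dot (B g) <=
  \sum_(g <- s) mu g * hnorm2 dot (B g - (pi g v - v)).
Proof.
move=> hs; set c := fun g => pi g v - v.
have E : \sum_(g <- s) (mu g)%:C * dot (B g - c g) (B g - c g) =
   \sum_(g <- s) (mu g)%:C * dot (B g) (B g) + \sum_(g <- s) (mu g)%:C * dot (c g) (c g)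
   - \sum_(g <- s) (mu g)%:C * dot (B g) (c g) - (\sum_(g <- s) (mu g)%:C * dot (B g) (c g))^*%C.
  rewrite cj_sum -big_split /= -sumrB -sumrB; apply: eq_bigr => g _.
  rewrite (dotBl hip) (dotBr hip (B g) (c g) (B g)) (dotBr hip (B g) (c g) (c g)) (dotC hip (B g) (c g)) cjM conjc_real; ring.
rewrite key_zero // conjc0 !subr0 in E.
have := congr1 (@complex.Re R) E; rewrite ReD !Re_sum.
have F (w : V) g : complex.Re ((mu g)%:C * dot w w) = mu g * hnorm2 dot w.
  by rewrite ReRM.
under eq_bigr do rewrite F; under [X in _ = X + _]eq_bigr do rewrite F.
under [X in _ = _ + X]eq_bigr do rewrite F.
move=> ->; rewrite lerDl; apply: sumr_ge0 => g _; apply: mulr_ge0; [exact: mu_ge0 | exact: hnorm2_ge0].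
Qed.

Lemma harmonic_not_closure : (exists g, B g != 0) -> ~ in_closure_coboundaries dot pi B.
Proof.
move=> [g0 hg0] hcl.
case: hmu => _ [s [hs hs1]] _ hgen.
have T0 : \sum_(g <- s) mu g * hnorm2 dot (B g) <= 0.
  apply: forall_small => e e0.
  have e2 : 0 < e / 2 by rewrite divr_gt0.
  have [v hv] := hcl s (e / 2) e2.
  apply: le_lt_trans (key_ineq v hs) _.
  apply: (@le_lt_trans _ _ (\sum_(g <- s) mu g * (e / 2))).
    rewrite big_seq [X in _ <= X]big_seq; apply: ler_sum => g gs.
    by apply: ler_wpM2l; [exact: mu_ge0 | apply: ltW; apply: hv].
  by rewrite -mulr_suml hs1 mul1r; lra.
have Bsupp g : mu g != 0 -> B g = 0.
  move=> mug; have gs : g \in s by case: hs => _; apply.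
  have nn g' : 0 <= mu g' * hnorm2 dot (B g') by apply: mulr_ge0; [exact: mu_ge0 | exact: hnorm2_ge0].
  have := T0; rewrite (bigD1_seq g) //=; last by case: hs.
  have h1 : 0 <= \sum_(i <- s | i != g) mu i * hnorm2 dot (B i) by apply: sumr_ge0 => i _; apply: nn.
  move=> h2.
  have h3 : mu g * hnorm2 dot (B g) <= 0 by lra.
  apply: (hnorm2_eq0 hip); apply/le_anti; rewrite (hnorm2_ge0 hip) andbT.
  have mp : 0 < mu g by rewrite lt_def mug mu_ge0.
  by rewrite -(pmulr_rle0 _ mp).
have Hsub : is_subgroup (fun g => B g = 0).
  split; first exact: B1.
  - by move=> x y hx hy; rewrite hB hx hy u_0 addr0.
  - by move=> x hx; rewrite BV hx u_0 oppr0.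
by move/eqP: hg0; apply; apply: hgen Hsub _ => a; apply: Bsupp.
Qed.

End Harmonic.
Section Span.
Variables (R : realType) (V : lmodType R[i]).
Local Notation C := R[i].
Implicit Types (s e : seq V) (w v : V).

Definition nspan s w := exists c : nat -> C, w = \sum_(0 <= i < size s) c i *: nth 0 s i.

Lemma in_spanE s w : in_span s w <-> nspan s w.
Proof.
split.
- move=> [c ->].
  exists (fun i => if @insub _ (fun k => (k < size s)%N) 'I_(size s) i is Some k then c k else 0).
  rewrite big_mkord; apply: eq_bigr => k _; by rewrite valK.
- move=> [c ->]; exists (fun k => c (val k)); by rewrite big_mkord.
Qed.

Lemma nspan0 s : nspan s 0.
Proof. by exists (fun _ => 0); rewrite big1 // => i _; rewrite scale0r. Qed.

Lemma nspanD s a u v : nspan s u -> nspan s v -> nspan s (a *: u + v).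
Proof.
move=> [c1 ->] [c2 ->]; exists (fun i => a * c1 i + c2 i).
rewrite scaler_sumr -big_split /=; apply: eq_bigr => i _.
by rewrite scalerDl scalerA.
Qed.

Lemma nspan_nth s i : nspan s (nth 0 s i).
Proof.
have [hi|hi] := ltnP i (size s); last by rewrite nth_default //; apply: nspan0.
exists (fun j => (j == i)%:R).
rewrite (bigD1_seq i) ?mem_index_iota ?iota_uniq //= eqxx scale1r big1 ?addr0 //.
by move=> j /negbTE ->; rewrite scale0r.
Qed.

Lemma nspan_sum s (I : Type) (r : seq I) (F : I -> V) :
  (forall i, nspan s (F i)) -> nspan s (\sum_(i <- r) F i).
Proof.
move=> hF; elim: r => [|i r IH]; first by rewrite big_nil; apply: nspan0.
by rewrite big_cons -[F i]scale1r; apply: nspanD.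
Qed.

Lemma nspan_nil w : nspan [::] w -> w = 0.
Proof. by move=> [c ->]; rewrite big_geq. Qed.

Lemma nspan_rcons s v w : nspan (rcons s v) w <-> exists a, nspan s (w - a *: v).
Proof.
split.
- move=> [c ->]; exists (c (size s)); exists c.
  rewrite size_rcons big_nat_recr //= nth_rcons ltnn eqxx addrK.
  apply: eq_big_nat => i /andP[_ hi]; by rewrite nth_rcons hi.
- move=> [a [c hc]]; exists (fun i => if (i < size s)%N then c i else a).
  rewrite size_rcons big_nat_recr //= nth_rcons ltnn eqxx.
  rewrite -[w](subrK (a *: v)) hc; congr (_ + _).
  apply: eq_big_nat => i /andP[_ hi]; by rewrite nth_rcons hi.
Qed.

Variable dot : V -> V -> C.
Hypothesis hip : is_inner_product dot.

Definition orth e := forall i j, (i < size e)%N -> (j < size e)%N -> i != j ->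
  dot (nth 0 e i) (nth 0 e j) = 0.
Definition nzl e := forall i, (i < size e)%N -> nth 0 e i != 0.

Lemma gram_schmidt s : exists e, [/\ orth e, nzl e & forall w, nspan s w -> nspan e w].
Proof.
elim/last_ind: s => [|s v [e [he1 he2 he3]]].
  exists [::]; split => // w /nspan_nil ->; exact: nspan0.
pose r := v - \sum_(0 <= i < size e) (dot v (nth 0 e i) / dot (nth 0 e i) (nth 0 e i)) *: nth 0 e i.
have vr : nspan e (v - r).
  rewrite /r opprB addrC subrK; apply: nspan_sum => i.
  by rewrite -[_ *: _]addr0; apply: nspanD; [apply: nspan_nth | apply: nspan0].
have orth_r j : (j < size e)%N -> dot r (nth 0 e j) = 0.
  move=> hj; rewrite /r (dotBl hip) (dot_suml hip).
  rewrite (bigD1_seq j) ?mem_index_iota ?iota_uniq //= big1 ?addr0.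
    rewrite (dotZl hip) divfK ?subrr //.
    by apply/eqP => /(ip4 hip) h; move: (he2 j hj); rewrite h eqxx.
  move=> i hij; rewrite (dotZl hip).
  have [hi|hi] := ltnP i (size e).
    by rewrite (he1 i j) // mulr0.
  by rewrite nth_default // !(dot0l hip) mulr0.
have [r0|rn0] := eqVneq r 0.
  exists e; split => // w /nspan_rcons [a ha].
  rewrite -[w](subrK (a *: v)) addrC; apply: nspanD; last exact: he3.
  by move: vr; rewrite r0 subr0.
exists (rcons e r); split.
- move=> i j; rewrite size_rcons !ltnS => hi hj nij.
  rewrite leq_eqVlt in hi; rewrite leq_eqVlt in hj.
  rewrite !nth_rcons.
  case/orP: hi => [/eqP hi | hi]; case/orP: hj => [/eqP hj | hj].
  + by rewrite hi hj eqxx in nij.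
  + by rewrite hi ltnn eqxx hj orth_r.
  + by rewrite hj ltnn eqxx hi (dotC hip) orth_r // conjc0.
  + by rewrite hi hj he1.
- move=> i; rewrite size_rcons ltnS leq_eqVlt nth_rcons => /orP[/eqP -> | hi].
    by rewrite ltnn eqxx.
  by rewrite hi he2.
- move=> w /nspan_rcons [a ha]; apply/nspan_rcons; exists a.
  have -> : w - a *: r = (w - a *: v) + a *: (v - r) by rewrite scalerBr addrA subrK.
  by rewrite addrC; apply: nspanD => //; apply: he3.
Qed.

End Span.
Section NoFD.
Variables (R : realType) (G : groupType) (S : eqType) (act : G -> S -> S).
Hypothesis hact : is_action act.
Hypothesis hfix : forall f : S -> R[i], in_l2 f ->
     (forall g x, quasi_regular act g f x = f x) -> forall x, f x = 0.
Local Notation C := R[i].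
Local Notation V := (l2 R S).
Local Notation D := (@dot R S).
Local Notation P := (@qpi R G S act hact).
Local Open Scope complex_scope.

Lemma no_fd : ~ has_nonzero_fd_subrep P.
Proof.
move=> [s [[w0 [hw0 nz0]] hinv]].
have hu := pi_unitary R hact.
have hip := @dot_inner R S.
have [e [he1 he2 he3]] := gram_schmidt hip s.
set n := size e.
have hpos (w : V) : w != 0 -> 0 < hnorm2 D w.
  move=> wn; rewrite lt_def (hnorm2_ge0 hip) andbT.
  by apply/eqP => /(hnorm2_eq0 hip) h; rewrite h eqxx in wn.
have Npos i : (i < n)%N -> 0 < hnorm2 D (nth 0 e i) by move=> hi; apply: hpos; apply: he2.
pose coef x i := ((hnorm2 D (nth 0 e i))^-1)%:C * ((nth 0 e i) x)^*.
pose ux x := \sum_(0 <= i < n) coef x i *: nth 0 e i.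
have ux_in x : nspan e (ux x).
  apply: nspan_sum => i; rewrite -[_ *: _]addr0; apply: nspanD; [exact: nspan_nth | exact: nspan0].
have repr x (w : V) : nspan e w -> D w (ux x) = w x.
  move=> [c ->]; rewrite (dot_suml hip) l2E_sum; apply: eq_big_nat => j /andP[_ hj].
  rewrite (dotZl hip) l2E_scale; congr (_ * _).
  rewrite /ux (dot_sumr hip) (bigD1_seq j) ?mem_index_iota ?iota_uniq //= big1 ?addr0.
    rewrite (dotZr hip) (dot_selfE hip) /coef cjM conjc_real conjcK.
    have Nn : hnorm2 D (nth 0 e j) != 0 by rewrite gt_eqF // Npos.
    rewrite mulrC mulrA -rmorphM mulfV // mul1r //.
  move=> i hij; rewrite (dotZr hip).
  have [hi|hi] := ltnP i n.
    by rewrite (he1 j i) // ?mulr0 // eq_sym.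
  by rewrite (nth_default 0 hi) (dot0r hip) mulr0.
pose H x := \sum_(0 <= i < n) cabs2 (nth 0 e i x) / hnorm2 D (nth 0 e i).
have hux x : hnorm2 D (ux x) = H x.
  rewrite /hnorm2 repr // l2E_sum Re_sum; apply: eq_bigr => i _.
  rewrite l2E_scale /coef -mulrA ReRM [_^* * _]mulrC mulcJ /= mulrC //.
have Hsum t : uniq t -> \sum_(x <- t) H x <= n%:R.
  move=> ut; rewrite exchange_big /=.
  apply: le_trans (_ : \sum_(0 <= i < n) (1 : R) <= _); last by rewrite sumr_const_nat subn0.
  rewrite big_seq [X in _ <= X]big_seq; apply: ler_sum => i; rewrite mem_index_iota => /andP[_ hi].
  rewrite -mulr_suml ler_pdivrMr ?Npos // mul1r hnorm2E.
  exact: psum_ub (bdd_l2 _) ut.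
have ratio_le x (w : V) : in_span s w -> w != 0 -> cabs2 (w x) / hnorm2 D w <= H x.
  move=> /in_spanE ws wn; rewrite ler_pdivrMr ?hpos // -(repr x w (he3 _ ws)) -hux mulrC.
  exact: cauchy_schwarz hip _ _.
have ratio_le1 x (w : V) : w != 0 -> cabs2 (w x) / hnorm2 D w <= 1.
  by move=> wn; rewrite ler_pdivrMr ?hpos // mul1r; apply: cabs2_le_hnorm2.
have ratio_ge0 x (w : V) : 0 <= cabs2 (w x) / hnorm2 D w.
  by rewrite divr_ge0 // ?cabs2_ge0 // (hnorm2_ge0 hip).
pose A x := (fun r : R => exists w : V, [/\ in_span s w, w != 0 & r = cabs2 (w x) / hnorm2 D w]).
pose F x := sup (A x).
have A_ne x : exists r, A x r by exists (cabs2 (w0 x) / hnorm2 D w0), w0.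
have A_sup x : has_sup (A x).
  by split => //; exists 1 => r [w [_ wn ->]]; apply: ratio_le1.
have F_ge x r : A x r -> r <= F x by move=> ar; apply: sup_upper_bound.
have F_le1 x : F x <= 1 by apply: ge_sup => // r [w [_ wn ->]]; apply: ratio_le1.
have F_leH x : F x <= H x by apply: ge_sup => // r [w [ws wn ->]]; apply: ratio_le.
have F_ge0 x : 0 <= F x.
  by apply: le_trans (ratio_ge0 x w0) _; apply: F_ge; exists w0.
have pVK g (w : V) : P g^-1%g (P g w) = w.
  by have := u_VK hu g^-1%g w; rewrite invgK.
have pn0 g (w : V) : w != 0 -> P g w != 0.
  move=> wn; apply/eqP => h; move: wn; rewrite -(pVK g w) h.
  by rewrite (u_0 hu) eqxx.
have hn g (w : V) : hnorm2 D (P g w) = hnorm2 D w by rewrite /hnorm2 (u_dot hu).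
have Finv g x : F (act g^-1%g x) = F x.
  rewrite /F; congr sup; apply: funext => r; apply: propext; split.
    move=> [w [ws wn ->]]; exists (P g w); split.
    - exact: hinv.
    - exact: pn0.
    - by rewrite hn piE.
  move=> [w [ws wn ->]]; exists (P g^-1%g w); split.
  - exact: hinv.
  - exact: pn0.
  - by rewrite hn piE invgK act_Kv.
pose f x := (F x)%:C.
have f_l2 : in_l2 f.
  exists n%:R => t ut; apply: le_trans (Hsum t ut); apply: ler_sum => x _.
  rewrite /f cabs2R; apply: le_trans (F_leH x).
  have := F_ge0 x; have := F_le1 x; nra.
have fixf g x : quasi_regular act g f x = f x by rewrite /quasi_regular /f Finv.
have [x0 hx0] : exists x, w0 x != 0.
  case: (pselect (exists x, w0 x != 0)) => // hno; move/eqP: nz0; case.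
  apply: l2_ext => x; rewrite l2E_0; apply/eqP; apply/negPn/negP => hx; apply: hno; by exists x.
have := hfix f_l2 fixf x0; rewrite /f => /complexI F0.
have : 0 < cabs2 (w0 x0) / hnorm2 D w0.
  rewrite divr_gt0 ?hpos // lt_def cabs2_ge0 andbT; apply/eqP => /cabs2_eq0 h.
  by rewrite h eqxx in hx0.
have := F_ge x0 _ (ex_intro _ w0 (And3 hw0 nz0 erefl)); rewrite F0.
lra.
Qed.

End NoFD.

Unset Implicit Arguments.

Theorem proposition4p2
  (R : realType) (G : groupType) (S : eqType) (act : G -> S -> S) :
  finitely_generated G ->
  locally_finite_by_Z G ->
  is_action act ->
  (* the quasi-regular representation pi of G on l^2(S) has no nonzero
     fixed vector *)
  (forall f : S -> R[i], in_l2 f ->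
     (forall g x, quasi_regular act g f x = f x) -> forall x, f x = 0) ->
  (* there is a nonzero mu-harmonic 1-cocycle b : G -> l^2(S) for pi, for some
     symmetric probability measure mu on G with finite generating support *)
  (exists (mu : G -> R) (b : G -> S -> R[i]),
     [/\ sym_fin_gen_prob mu,
         (forall g, in_l2 (b g)),
         (forall g h x, b (g * h)%g x = b g x + quasi_regular act g (b h) x),
         (forall s, supp_list mu s ->
            forall x, \sum_(g <- s) ((mu g)%:C)%C * b g x = 0)
       & (exists g x, b g x != 0)]) ->
  ~ property_HFD R G.
Proof.
move=> _ _ hact hfix [mu [b [hmu hb2 hcoc hharm [g0 [x0 hgx]]]]] HFD.
pose B g : l2 R S := L2 (hb2 g).
have hip := @dot_inner R S.
have hilb : is_hilbert (@dot R S) by split; [exact: hip | exact: (@l2_complete R S)].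
have hu := pi_unitary R hact.
have hcB : cocycle (@qpi R G S act hact) B.
  by move=> g h; apply: l2_ext => x; rewrite l2E_add piE; apply: hcoc.
have harmB : forall s, supp_list mu s -> \sum_(g <- s) ((mu g)%:C)%C *: B g = 0.
  move=> s hs; apply: l2_ext => x; rewrite l2E_sum l2E_0.
  under eq_bigr do rewrite l2E_scale; exact: hharm.
have nzB : exists g, B g != 0.
  exists g0; apply/eqP => h; move: hgx.
  by rewrite (_ : b g0 x0 = B g0 x0) // h l2E_0 eqxx.
have H1 : reduced_H1_nonzero (@dot R S) (@qpi R G S act hact).
  exists B; split => //; exact: (harmonic_not_closure hip hu hcB hmu harmB nzB).
exact: (@no_fd R G S act hact hfix (HFD _ _ hilb _ hu H1)).
Qed.
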